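(* Let $m,a,b,n$ be positive integers with $n\ge 3$ and $(3m+1)/2\le a<b\le (5m-1)/3$. Let $A\subset\mathbb N_+$ with $|A|=n-1$, $\min A=a$, $\max A=b$, and suppose that $A$ induces a $B_3$ set in $\mathbb Z/m\mathbb Z$ in the following sense: the sums $x_1+\dots+x_h$, taken over all $h\in\{1,2,3\}$ and all multisets $\{x_1,\dots,x_h\}$ of elements of $A$, are pairwise distinct modulo $m$ (distinct multisets, including those of different sizes, give distinct residues). Let $S=\langle \{m\}\cup A\rangle_{4m}$. Then $S$ has conductor $4m$, $|P\cap L|=n$, and $$W_0(S)=-\binom{n}{3}.$$
   Context: $\mathbb N=\{0,1,2,\dots\}$, $\mathbb N_+=\mathbb N\setminus\{0\}$; $[x,y]=\{z\in\mathbb Z: x\le z\le y\}$. For a finite set $B$ of positive integers and a positive integer $t$, $\langle B\rangle_t=\big(\sum_{x\in B}\mathbb N x\big)\cup\{z\in\mathbb Z: z\ge t\}$; this is a numerical semigroup. A numerical semigroup is a submonoid $S\subseteq\mathbb N$ with $\mathbb N\setminus S$ finite; multiplicity $m=\min(S\setminus\{0\})$; conductor $c=1+\max(\mathbb Z\setminus S)$; $q=\lceil c/m\rceil$, $\rho=qm-c$. Let $S^*=S\setminus\{0\}$, $D=S^*+S^*$, $P=S^*\setminus D$ (primitive elements), $L=S\cap[0,c-1]$, $D_q=D\cap[c,c+m-1]$, and $W_0(S)=|P\cap L|\,|L|-q|D_q|+\rho$. *)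

(* Defs.v *)
From mathcomp Require Import all_boot all_order all_algebra.
Set Implicit Arguments. Unset Strict Implicit. Unset Printing Implicit Defensive.

Fixpoint rep (B : seq nat) (x : nat) : bool :=
  match B with
  | [::] => x == 0
  | b :: B' => [exists k : 'I_x.+1, (k * b <= x) && rep B' (x - k * b)]
  end.

(* membership in <B>_t = (sum_{x in B} N x) ∪ {z >= t} *)
Definition inS (B : seq nat) (t x : nat) : bool := (t <= x) || rep B x.

(* multiplicity m = min (S \ {0}); every z >= t is in S, so it is <= max t 1 *)
Definition mult (B : seq nat) (t : nat) : nat :=
  head (maxn t 1) [seq x <- iota 1 t | inS B t x].

(* conductor c = 1 + max (Z \ S); all gaps lie in [0, t), and if there are
   no nonnegative gaps then max (Z \ S) = -1, so c = 0 *)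
Definition cond (B : seq nat) (t : nat) : nat :=
  \max_(0 <= z < t | ~~ inS B t z) z.+1.

Definition inD (B : seq nat) (t x : nat) : bool :=
  has (fun y => inS B t y && inS B t (x - y)) (iota 1 x.-1).

Definition inP (B : seq nat) (t x : nat) : bool :=
  [&& 0 < x, inS B t x & ~~ inD B t x].

Definition qS (B : seq nat) (t : nat) : nat :=
  let m := mult B t in let c := cond B t in (c + m - 1) %/ m.   (* ceil (c/m) *)

Definition rhoS (B : seq nat) (t : nat) : nat :=
  qS B t * mult B t - cond B t.

Definition cardL (B : seq nat) (t : nat) : nat :=
  count (inS B t) (iota 0 (cond B t)).

Definition cardPL (B : seq nat) (t : nat) : nat :=
  count (inP B t) (iota 0 (cond B t)).

Definition cardDq (B : seq nat) (t : nat) : nat :=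
  count (inD B t) (iota (cond B t) (mult B t)).

Definition W0 (B : seq nat) (t : nat) : int :=
  ((cardPL B t * cardL B t)%:Z - (qS B t * cardDq B t)%:Z + (rhoS B t)%:Z)%R.

(* the sums over multisets of size 1..3 of elements of A are pairwise distinct
   modulo m; multisets are represented by lists up to permutation *)
Definition B3_mod (A : seq nat) (m : nat) : Prop :=
  forall s1 s2 : seq nat,
    0 < size s1 <= 3 -> 0 < size s2 <= 3 ->
    all (mem A) s1 -> all (mem A) s2 ->
    sumn s1 = sumn s2 %[mod m] -> perm_eq s1 s2.

(* Main.v *)
Require Import Defs.
From mathcomp Require Import all_boot all_order all_algebra zify.
Set Implicit Arguments. Unset Strict Implicit. Unset Printing Implicit Defensive.

Lemma split_m (b : nat) (B s : seq nat) : all (mem (b :: B)) s ->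
  exists k s', all (mem B) s' /\ sumn s = k * b + sumn s'.
Proof.
elim: s => [|y s IH] /=; first by exists 0, [::].
case/andP; rewrite inE => /orP [/eqP -> | Hy] /IH [k [s' [H1 H2]]].
  by exists k.+1, s'; split => //; rewrite H2 mulSn addnA.
exists k, (y :: s'); split; first by rewrite /= Hy.
by rewrite H2 /=; lia.
Qed.

Lemma rep_spec (B : seq nat) x : all (fun y => 0 < y) B ->
  rep B x <-> exists s, all (mem B) s /\ sumn s = x.
Proof.
elim: B x => [|b B IH] x /=.
  move=> _; split; first by move/eqP->; exists [::].
  by case=> [[|y s]] [] //= _ <-.
case/andP => Hb HB; split.
  case/existsP=> k /andP [Hk /(IH _ HB) [s [Hs Hsum]]].
  exists (nseq k b ++ s); split.
    rewrite all_cat; apply/andP; split.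
      by apply/allP => y /nseqP [-> _]; exact: mem_head.
    by apply/allP => y /(allP Hs) Hy; apply/orP; right.
  by rewrite sumn_cat sumn_nseq Hsum; lia.
case=> s [Hs Hsum].
have [k [s' [Hs' Hss]]] := split_m Hs.
have Hk : k < x.+1.
  have : k * b <= x by rewrite -Hsum Hss leq_addr.
  by move: Hb; nia.
apply/existsP; exists (Ordinal Hk) => /=.
rewrite -Hsum Hss leq_addr /=; apply/IH => //.
by exists s'; split => //; lia.
Qed.

Lemma rep_mA m A x : 0 < m -> all (fun y => 0 < y) A ->
  rep (m :: A) x <-> exists k s, all (mem A) s /\ k * m + sumn s = x.
Proof.
move=> Hm HA /=; split.
  case/existsP=> k /andP [Hk /(rep_spec _ HA) [s [Hs Hsum]]].
  by exists k, s; split => //; lia.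
case=> k [s [Hs Hsum]].
have Hk : k < x.+1 by move: Hm; nia.
apply/existsP; exists (Ordinal Hk) => /=.
rewrite -Hsum leq_addr /=; apply/(rep_spec _ HA).
by exists s; split => //; lia.
Qed.

Fixpoint pairs (A : seq nat) : seq nat :=
  if A is x :: A' then map (addn x) A ++ pairs A' else [::].
Fixpoint triples (A : seq nat) : seq nat :=
  if A is x :: A' then map (addn x) (pairs A) ++ triples A' else [::].

Lemma size_pairs A : 2 * size (pairs A) = size A * (size A).+1.
Proof. elim: A => [|x A IH] //=; rewrite size_cat size_map /=; nia. Qed.

Lemma size_triples A : 6 * size (triples A) = size A * (size A).+1 * (size A).+2.
Proof.
elim: A => [|x A IH] //=; rewrite size_cat size_map.
have := size_pairs (x :: A); rewrite /=; nia.
Qed.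

Lemma mem_pairs A z : z \in pairs A <-> exists u v, [/\ u \in A, v \in A & z = u + v].
Proof.
elim: A z => [|x A IH] z; first by split => // [[u [v [] ]]].
change (pairs (x :: A)) with (map (addn x) (x::A) ++ pairs A).
rewrite mem_cat; split.
  case/orP => [/mapP [y Hy ->] | /IH [u [v [Hu Hv ->]]]].
    by exists x, y; rewrite inE eqxx.
  by exists u, v; rewrite !inE Hu Hv !orbT.
case=> u [v [Hu Hv ->]].
rewrite in_cons in Hu; rewrite in_cons in Hv.
case/predU1P: Hu => [-> | Hu]; case/predU1P: Hv => [-> | Hv].
- by apply/orP; left; apply/mapP; exists x; rewrite ?inE ?eqxx.
- by apply/orP; left; apply/mapP; exists v; rewrite ?inE ?Hv ?orbT.
- by apply/orP; left; apply/mapP; exists u; rewrite ?inE ?Hu ?orbT // addnC.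
- by apply/orP; right; apply/IH; exists u, v.
Qed.

Lemma mem_triples A z : z \in triples A <->
  exists u v w, [/\ u \in A, v \in A, w \in A & z = u + v + w].
Proof.
elim: A z => [|x A IH] z; first by split => // [[u [v [w [] ]]]].
change (triples (x :: A)) with (map (addn x) (pairs (x::A)) ++ triples A).
rewrite mem_cat; split.
  case/orP => [/mapP [y /mem_pairs [u [v [Hu Hv ->]]] ->] | /IH [u [v [w [Hu Hv Hw ->]]]]].
    by exists x, u, v; rewrite inE eqxx addnA.
  by exists u, v, w; rewrite !inE Hu Hv Hw !orbT.
case=> u [v [w [Hu Hv Hw ->]]].
have Hp : forall p q r, p \in x :: A -> q \in x :: A -> x + (p + q) = r -> r \in
   [seq x + i | i <- pairs (x :: A)].
  move=> p q r Hp Hq <-; apply/mapP; exists (p + q) => //.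
  by apply/mem_pairs; exists p, q.
have Hu0 := Hu; have Hv0 := Hv; have Hw0 := Hw.
rewrite in_cons in Hu; rewrite in_cons in Hv; rewrite in_cons in Hw.
case/predU1P: (Hu) => [Eu | Hu']; case/predU1P: (Hv) => [Ev | Hv']; case/predU1P: (Hw) => [Ew | Hw'];
  try (apply/orP; left; first [ (apply: (Hp v w); [assumption|assumption|lia])
     | (apply: (Hp u w); [assumption|assumption|lia]) | (apply: (Hp u v); [assumption|assumption|lia])]).
by apply/orP; right; apply/IH; exists u, v, w.
Qed.

Definition H2 (A : seq nat) := forall x y u v, x \in A -> y \in A -> u \in A -> v \in A ->
  x + y = u + v -> perm_eq [:: x; y] [:: u; v].
Definition H3 (A : seq nat) := forall x y z u v w, x \in A -> y \in A -> z \in A ->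
  u \in A -> v \in A -> w \in A ->
  x + y + z = u + v + w -> perm_eq [:: x; y; z] [:: u; v; w].

Lemma H2_cons x A : H2 (x :: A) -> H2 A.
Proof. move=> H y z u v *; apply: H => //; rewrite in_cons; apply/orP; right => //. Qed.
Lemma H3_cons x A : H3 (x :: A) -> H3 A.
Proof. move=> H y z t u v w *; apply: H => //; rewrite in_cons; apply/orP; right => //. Qed.

Lemma inc (x : nat) A y : y \in A -> y \in x :: A.
Proof. by move=> H; rewrite in_cons H orbT. Qed.

Lemma ucat (s1 s2 : seq nat) : uniq s1 -> uniq s2 ->
  (forall z, z \in s2 -> z \in s1 -> False) -> uniq (s1 ++ s2).
Proof.
move=> H1 H2 H; rewrite cat_uniq H1 H2 andbT; apply/hasPn => z Hz; apply/negP; exact: H.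
Qed.

Lemma uniq_pairs A : uniq A -> H2 A -> uniq (pairs A).
Proof.
elim: A => [|x A IH] // Hu H; have /andP [HxA HA] : (x \notin A) && uniq A := Hu.
change (pairs (x :: A)) with (map (addn x) (x::A) ++ pairs A).
apply: ucat.
- by rewrite map_inj_uniq //; apply: addnI.
- exact: IH (H2_cons H).
- move=> z /mem_pairs [u [v [Hu1 Hv ->]]] /mapP [y Hy E].
  have := perm_mem (H x y u v (mem_head _ _) Hy (inc x Hu1) (inc x Hv) (esym E)) x.
  rewrite mem_head !inE => /esym /orP [] /eqP Ex; move: HxA; rewrite Ex ?Hu1 ?Hv //;
  by rewrite !in_cons ?Hu1 ?Hv ?orbT.
Qed.

Lemma uniq_triples A : uniq A -> H2 A -> H3 A -> uniq (triples A).
Proof.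
elim: A => [|x A IH] // Hu G2 G3.
have /andP [HxA HA] : (x \notin A) && uniq A := Hu.
change (triples (x :: A)) with (map (addn x) (pairs (x::A)) ++ triples A).
apply: ucat.
- by rewrite map_inj_uniq; [exact: uniq_pairs | apply: addnI].
- exact: IH (H2_cons G2) (H3_cons G3).
- move=> z /mem_triples [u [v [w [Hu1 Hv Hw ->]]]] /mapP [p /mem_pairs [y [t [Hy Ht ->]]] E].
  have := perm_mem (G3 x y t u v w (mem_head _ _) Hy Ht (inc x Hu1) (inc x Hv) (inc x Hw) ltac:(lia)) x.
  rewrite mem_head !inE => /esym /orP [/eqP Ex|/orP [] /eqP Ex]; by move: HxA; rewrite Ex ?Hu1 ?Hv ?Hw.
Qed.

Definition Bnd (m : nat) (A : seq nat) :=
  forall u, u \in A -> 3 * m + 1 <= 2 * u /\ 3 * u <= 5 * m - 1.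

Definition Llist m A := [:: 0; m; 2 * m; 3 * m] ++ A ++ map (addn m) A ++
  map (addn (2 * m)) A ++ pairs A.
Definition Dlist m A := 4 * m :: map (addn m) (pairs A) ++ map (addn (3 * m)) A ++ triples A.

Lemma Bnd_pos m A : 0 < m -> Bnd m A -> all (fun y => 0 < y) A.
Proof. by move=> Hm H; apply/allP => u /H; lia. Qed.

Lemma sum_lb m A s : Bnd m A -> all (mem A) s -> size s * (3 * m + 1) <= 2 * sumn s.
Proof.
move=> H; elim: s => [|u s IH] //= /andP [Hu Hs].
rewrite mulSn; have := H u Hu; have := IH Hs; move: (size s * _) => q; lia.
Qed.

Lemma rep_char m A x : 0 < m -> Bnd m A -> x < 5 * m ->
  rep (m :: A) x <-> x \in Llist m A ++ Dlist m A.
Proof.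
move=> Hm HB Hx; have Hpos := Bnd_pos Hm HB.
rewrite (rep_mA x Hm Hpos); split.
  case=> k [s [Hs Hsum]].
  have Hsz : size s <= 3.
    have := sum_lb HB Hs; move: Hsum Hx; nia.
  rewrite /Llist /Dlist.
  case: s Hs Hsum Hsz => [|u [|v [|w [|t s]]]] //=.
  - move=> _ Hsum _; have : k <= 4 by nia.
    case: k Hsum => [|[|[|[|[|k]]]]] Hsum Hk; try lia.
    + by have -> : x = 0 by lia.
    + have -> : x = m by lia.
      by rewrite !(mem_cat, in_cons) eqxx ?orbT.
    + have -> : x = 2 * m by lia.
      by rewrite !(mem_cat, in_cons) eqxx ?orbT.
    + have -> : x = 3 * m by lia.
      by rewrite !(mem_cat, in_cons) eqxx ?orbT.
    + have -> : x = 4 * m by lia.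
      by rewrite !(mem_cat, in_cons) eqxx ?orbT.
  - rewrite andbT => Hu Hsum _; have := HB u Hu => Hbu.
    have : k <= 3 by nia.
    case: k Hsum => [|[|[|[|k]]]] Hsum Hk; try lia.
    + have -> : x = u by lia.
      by rewrite !(mem_cat, in_cons) Hu ?orbT.
    + have -> : x = m + u by lia.
      by rewrite !(mem_cat, in_cons) (map_f (addn m) Hu) ?orbT.
    + have -> : x = 2 * m + u by lia.
      by rewrite !(mem_cat, in_cons) (map_f (addn (2 * m)) Hu) ?orbT.
    + have -> : x = 3 * m + u by lia.
      by rewrite !(mem_cat, in_cons) (map_f (addn (3 * m)) Hu) ?orbT.
  - rewrite andbT => /andP [Hu Hv] Hsum _; have := HB u Hu; have := HB v Hv => Hbv Hbu.
    have Huv : u + v \in pairs A by apply/mem_pairs; exists u, v.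
    have : k <= 1 by nia.
    case: k Hsum => [|[|k]] Hsum Hk; try lia.
    + have -> : x = u + v by lia.
      by rewrite !(mem_cat, in_cons) Huv ?orbT.
    + have -> : x = m + (u + v) by lia.
      by rewrite !(mem_cat, in_cons) (map_f (addn m) Huv) ?orbT.
  - rewrite andbT => /and3P [Hu Hv Hw] Hsum _; have := HB u Hu; have := HB v Hv; have := HB w Hw => Hbw Hbv Hbu.
    have Huv : u + v + w \in triples A by apply/mem_triples; exists u, v, w.
    have : k <= 0 by nia.
    case: k Hsum => [|k] Hsum Hk; try lia.
    have -> : x = u + v + w by lia.
      by rewrite !(mem_cat, in_cons) Huv ?orbT.
rewrite /Llist /Dlist !mem_cat !inE.
move=> H; case/orP: H => H.
  case/orP: H => [/or4P [] /eqP-> | /orP [Hu | /orP [/mapP [u Hu ->] | /orP [/mapP [u Hu ->] | /mem_pairs [u [v [Hu Hv ->]]]]]]].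
  - by exists 0, [::].
  - by exists 1, [::]; split => //=; lia.
  - by exists 2, [::]; split => //=; lia.
  - by exists 3, [::]; split => //=; lia.
  - by exists 0, [::x]; rewrite /= Hu; split => //=; lia.
  - by exists 1, [::u]; rewrite /= Hu; split => //=; lia.
  - by exists 2, [::u]; rewrite /= Hu; split => //=; lia.
  - by exists 0, [::u; v]; rewrite /= Hu Hv; split => //=; lia.
rewrite !mem_cat in H.
case/orP: H => [/eqP-> | /orP [/mapP [p /mem_pairs [u [v [Hu Hv ->]]] ->] | /orP [/mapP [u Hu ->] | /mem_triples [u [v [w [Hu Hv Hw ->]]]]]]].
- by exists 4, [::]; split => //=; lia.
- by exists 1, [::u; v]; rewrite /= Hu Hv; split => //=; lia.
- by exists 3, [::u]; rewrite /= Hu; split => //=; lia.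
- by exists 0, [::u; v; w]; rewrite /= Hu Hv Hw; split => //=; lia.
Qed.

Lemma Lbnd m A z : 5 <= m -> Bnd m A -> z \in Llist m A -> z = 0 \/ (m <= z /\ z.+2 <= 4 * m).
Proof.
move=> Hm HB; rewrite /Llist !mem_cat !inE.
case/orP => [/or4P [] /eqP-> | /orP [Hu | /orP [/mapP [u Hu ->] | /orP [/mapP [u Hu ->] | /mem_pairs [u [v [Hu Hv ->]]]]]]];
 try (by lia); try (have := HB _ Hu; lia).
have := HB _ Hu; have := HB _ Hv; lia.
Qed.

Lemma Dbnd m A z : 5 <= m -> Bnd m A -> z \in Dlist m A -> 4 * m <= z < 5 * m.
Proof.
move=> Hm HB; rewrite /Dlist in_cons !mem_cat.
case/orP => [/eqP-> | /orP [/mapP [p /mem_pairs [u [v [Hu Hv ->]]] ->] | /orP [/mapP [u Hu ->] | /mem_triples [u [v [w [Hu Hv Hw ->]]]]]]].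
- lia.
- have := HB _ Hu; have := HB _ Hv; lia.
- have := HB _ Hu; lia.
- have := HB _ Hu; have := HB _ Hv; have := HB _ Hw; lia.
Qed.

Lemma inS_lt4 m A z : 5 <= m -> Bnd m A -> z < 4 * m -> inS (m :: A) (4 * m) z = (z \in Llist m A).
Proof.
move=> Hm HB Hz; rewrite /inS leqNgt Hz /=.
have Hm0 : 0 < m by lia. have Hz5 : z < 5 * m by lia.
apply/idP/idP => H.
  have := (rep_char Hm0 HB Hz5).1 H; rewrite mem_cat => /orP [] // /(Dbnd Hm HB); lia.
apply/(rep_char Hm0 HB Hz5); by rewrite mem_cat H.
Qed.

Lemma inS_L m A z : 5 <= m -> Bnd m A -> z \in Llist m A -> inS (m :: A) (4 * m) z.
Proof. move=> Hm HB H; have := Lbnd Hm HB H => Hb; rewrite inS_lt4 //; lia. Qed.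

Lemma inS_ge m A z : 5 <= m -> Bnd m A -> 0 < z -> inS (m :: A) (4 * m) z -> m <= z.
Proof.
move=> Hm HB Hz; case: (ltnP z (4 * m)) => H4; last by lia.
rewrite inS_lt4 // => /(Lbnd Hm HB); lia.
Qed.

Lemma inD_intro B t y z : 0 < y -> 0 < z -> inS B t y -> inS B t z -> inD B t (y + z).
Proof.
move=> Hy Hz Sy Sz; apply/hasP; exists y; first by rewrite mem_iota; lia.
by rewrite Sy /= addKn Sz.
Qed.

Lemma inD_elim B t x : inD B t x -> exists y, [/\ 0 < y, y < x, inS B t y & inS B t (x - y)].
Proof.
case/hasP => y; rewrite mem_iota => Hy /andP [H1 H2]; exists y; split => //; lia.
Qed.

Lemma rep_add m A y z : 0 < m -> all (fun y => 0 < y) A ->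
  rep (m :: A) y -> rep (m :: A) z -> rep (m :: A) (y + z).
Proof.
move=> Hm HA /(rep_mA _ Hm HA) [k1 [s1 [H1 E1]]] /(rep_mA _ Hm HA) [k2 [s2 [H2 E2]]].
apply/(rep_mA _ Hm HA); exists (k1 + k2), (s1 ++ s2); split.
  by rewrite all_cat H1 H2.
rewrite sumn_cat -E1 -E2; lia.
Qed.

Lemma inS_small m A z : 5 <= m -> Bnd m A -> 0 < z < m -> inS (m :: A) (4 * m) z = false.
Proof.
move=> Hm HB Hz; apply/negP => /(inS_ge Hm HB); lia.
Qed.

Lemma inS_rep m A y : y < 4 * m -> inS (m :: A) (4 * m) y -> rep (m :: A) y.
Proof. by move=> Hy; rewrite /inS leqNgt Hy. Qed.

Lemma pairs_L m A p : p \in pairs A -> p \in Llist m A.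
Proof. by move=> H; rewrite /Llist !mem_cat H !orbT. Qed.

Lemma A_L m A u : u \in A -> u \in Llist m A.
Proof. by move=> H; rewrite /Llist !mem_cat H !orbT. Qed.

Lemma inD_char m A x : 5 <= m -> Bnd m A -> 4 * m <= x < 5 * m ->
  inD (m :: A) (4 * m) x = (x \in Dlist m A).
Proof.
move=> Hm HB Hx; have Hm0 : 0 < m by lia.
have Hpos := Bnd_pos Hm0 HB.
have Hx5 : x < 5 * m by lia.
apply/idP/idP.
  case/inD_elim => y [Hy0 Hyx Sy Sz].
  have Hy1 := inS_ge Hm HB Hy0 Sy.
  have Hz1 : m <= x - y by apply: (inS_ge Hm HB _ Sz); lia.
  have Ry : rep (m :: A) y by apply: inS_rep Sy; lia.
  have Rz : rep (m :: A) (x - y) by apply: inS_rep Sz; lia.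
  have := rep_add Hm0 Hpos Ry Rz; rewrite subnKC; last by lia.
  move/(rep_char Hm0 HB Hx5); rewrite mem_cat => /orP [/(Lbnd Hm HB)|//]; lia.
rewrite /Dlist in_cons !mem_cat.
case/orP => [/eqP-> | /orP [/mapP [p Hp ->] | /orP [/mapP [u Hu ->] | /mem_triples [u [v [w [Hu Hv Hw ->]]]]]]].
- rewrite (_ : 4 * m = m + 3 * m); last by lia.
  apply: inD_intro; try lia; apply: inS_L => //; rewrite /Llist !mem_cat !inE eqxx ?orbT //.
- have := (mem_pairs _ _).1 Hp => -[u [v [Hu Hv Ep]]].
  have := HB _ Hu; have := HB _ Hv => Hbv Hbu.
  apply: inD_intro; try lia; apply: inS_L => //; last exact: pairs_L.
  by rewrite /Llist !mem_cat !inE eqxx ?orbT.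
- have := HB _ Hu => Hbu.
  apply: inD_intro; try lia; apply: inS_L => //; last exact: A_L.
  by rewrite /Llist !mem_cat !inE eqxx ?orbT.
- have := HB _ Hu; have := HB _ Hv; have := HB _ Hw => Hbw Hbv Hbu.
  rewrite -addnA; apply: inD_intro; try lia; apply: inS_L => //; first exact: A_L.
  by apply: pairs_L; apply/mem_pairs; exists v, w.
Qed.

Lemma nD B t x y z : ~~ inD B t x -> inS B t y -> inS B t z -> x = y + z -> 0 < y -> 0 < z -> False.
Proof. by move=> /negP H Sy Sz E Hy Hz; apply: H; rewrite E; apply: inD_intro. Qed.

Lemma inP_char m A x : 5 <= m -> Bnd m A -> x < 4 * m ->
  inP (m :: A) (4 * m) x = (x \in m :: A).
Proof.
move=> Hm HB Hx; have Hm0 : 0 < m by lia.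
have Sm : inS (m :: A) (4 * m) m by apply: inS_L => //; rewrite /Llist !mem_cat !inE eqxx ?orbT.
have S2m : inS (m :: A) (4 * m) (2 * m) by apply: inS_L => //; rewrite /Llist !mem_cat !inE eqxx ?orbT.
rewrite /inP; apply/idP/idP.
- case/and3P => Hx0; rewrite inS_lt4 // => HL HnD.
  move: HL; rewrite /Llist !mem_cat !inE.
  case/orP => [/or4P [] /eqP E | /orP [Hu | /orP [/mapP [u Hu E] | /orP [/mapP [u Hu E] | /mem_pairs [u [v [Hu Hv E]]]]]]].
  + by rewrite E in Hx0.
  + by rewrite E eqxx.
  + by exfalso; apply: (nD HnD Sm Sm); lia.
  + by exfalso; apply: (nD HnD Sm S2m); lia.
  + by rewrite Hu orbT.
  + have := HB _ Hu => Hbu.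
    by exfalso; apply: (nD HnD Sm (inS_L Hm HB (A_L m Hu))); lia.
  + have := HB _ Hu => Hbu.
    by exfalso; apply: (nD HnD S2m (inS_L Hm HB (A_L m Hu))); lia.
  + have := HB _ Hu; have := HB _ Hv => Hbv Hbu.
    by exfalso; apply: (nD HnD (inS_L Hm HB (A_L m Hu)) (inS_L Hm HB (A_L m Hv))); lia.
- rewrite in_cons => /orP [/eqP -> | Hu].
    rewrite Hm0 Sm /=; apply/negP => /inD_elim [y [Hy0 Hyx Sy _]].
    have := inS_ge Hm HB Hy0 Sy; lia.
  have := HB _ Hu => Hbu.
  rewrite (inS_L Hm HB (A_L m Hu)) /=; apply/andP; split; first lia.
  apply/negP => /inD_elim [y [Hy0 Hyx Sy Sz]].
  have := inS_ge Hm HB Hy0 Sy; have : m <= x - y by apply: (inS_ge Hm HB _ Sz); lia.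
  lia.
Qed.

Lemma bM m A k z : Bnd m A -> z \in map (addn k) A -> 3 * m + 1 + 2 * k <= 2 * z /\ 3 * z <= 5 * m - 1 + 3 * k.
Proof. by move=> HB /mapP [u /HB Hu ->]; lia. Qed.

Lemma bP m A z : Bnd m A -> z \in pairs A -> 3 * m + 1 <= z /\ 3 * z <= 10 * m - 2.
Proof. by move=> HB /mem_pairs [u [v [/HB Hu /HB Hv ->]]]; lia. Qed.

Lemma bT m A z : Bnd m A -> z \in triples A -> 9 * m + 3 <= 2 * z /\ 3 * z <= 15 * m - 3.
Proof. by move=> HB /mem_triples [u [v [w [/HB Hu /HB Hv /HB Hw ->]]]]; lia. Qed.

Lemma uniq_L m A : 5 <= m -> Bnd m A -> uniq A -> H2 A -> uniq (Llist m A).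
Proof.
move=> Hm HB HU G2; rewrite /Llist.
apply: ucat; first by rewrite /= !inE; lia.
  apply: ucat => //.
    apply: ucat; first by rewrite map_inj_uniq //; apply: addnI.
      apply: ucat; first by rewrite map_inj_uniq //; apply: addnI.
        exact: uniq_pairs.
      move=> z /(bP HB) H1 /(bM HB) H2; lia.
    move=> z; rewrite mem_cat => /orP [/(bM HB) H1 | /(bP HB) H1] /(bM HB) H2; lia.
  move=> z; rewrite !mem_cat => /orP [/(bM HB) H1 | /orP [/(bM HB) H1 | /(bP HB) H1]] /HB H2; lia.
move=> z; rewrite !mem_cat => /orP [/HB H1 | /orP [/(bM HB) H1 | /orP [/(bM HB) H1 | /(bP HB) H1]]];
  rewrite !inE; lia.
Qed.

Lemma uniq_D m A : 5 <= m -> Bnd m A -> uniq A -> H2 A -> H3 A ->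
  (forall x u v w, x \in A -> u \in A -> v \in A -> w \in A -> 3 * m + x <> u + v + w) ->
  uniq (Dlist m A).
Proof.
move=> Hm HB HU G2 G3 G4; rewrite /Dlist cons_uniq; apply/andP; split.
  rewrite !mem_cat; apply/negP => /orP [/mapP [p /(bP HB) H1 E] | /orP [/(bM HB) H1 | /(bT HB) H1]]; lia.
apply: ucat.
- rewrite map_inj_uniq; [exact: uniq_pairs | apply: addnI].
- apply: ucat; first by rewrite map_inj_uniq //; apply: addnI.
    exact: uniq_triples.
  move=> z /mem_triples [u [v [w [Hu Hv Hw ->]]]] /mapP [x Hx E].
  exact: (G4 x u v w Hx Hu Hv Hw (esym E)).
- move=> z; rewrite mem_cat => /orP [/(bM HB) H1 | /(bT HB) H1] /mapP [p /(bP HB) H2 E]; lia.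
Qed.

Lemma count_eq (P : pred nat) lo n L : uniq L -> (forall z, z \in L -> lo <= z < lo + n) ->
  (forall z, lo <= z < lo + n -> P z = (z \in L)) -> count P (iota lo n) = size L.
Proof.
move=> HU HL HP; rewrite -size_filter; apply: perm_size; apply: uniq_perm.
- by rewrite filter_uniq // iota_uniq.
- done.
move=> z; rewrite mem_filter mem_iota.
case: (boolP (lo <= z < lo + n)) => H.
  by rewrite andbT HP.
rewrite andbF; case: (boolP (z \in L)) => // /HL H'.
by rewrite H' in H.
Qed.

Lemma cond_eq m A : 5 <= m -> Bnd m A -> cond (m :: A) (4 * m) = 4 * m.
Proof.
move=> Hm HB; rewrite /cond; apply/eqP; rewrite eqn_leq; apply/andP; split.
  by apply/bigmax_leqP_seq => z; rewrite mem_index_iota => Hz _; lia.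
have := @leq_bigmax_seq _ (index_iota 0 (4 * m)) (fun z => ~~ inS (m :: A) (4 * m) z)
   (fun z => z.+1) (4 * m).-1.
rewrite mem_index_iota (_ : (4 * m).-1.+1 = 4 * m); last by lia.
apply; first by lia.
rewrite inS_lt4 //; last by lia.
by apply/negP => /(Lbnd Hm HB); lia.
Qed.

Lemma mult_eq m A : 5 <= m -> Bnd m A -> mult (m :: A) (4 * m) = m.
Proof.
move=> Hm HB; rewrite /mult.
have Sm : inS (m :: A) (4 * m) m by apply: inS_L => //; rewrite /Llist !mem_cat !inE eqxx ?orbT.
rewrite (_ : 4 * m = m.-1 + (3 * m).+1); last by lia.
rewrite iotaD (_ : 1 + m.-1 = m); last by lia.
rewrite filter_cat (@eq_in_filter _ _ pred0); last first.
  move=> z; rewrite mem_iota => Hz; rewrite (_ : m.-1 + (3 * m).+1 = 4 * m); last by lia.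
  by rewrite inS_small //; lia.
rewrite filter_pred0 /=.
by rewrite (_ : m.-1 + (3 * m).+1 = 4 * m) ?Sm //; lia.
Qed.

Lemma bin3 n : 6 * 'C(n, 3) = n * (n - 1) * (n - 2).
Proof.
have b2 : forall k, 2 * 'C(k, 2) = k * (k - 1).
  elim=> [|k IH] //; rewrite binS bin1 mulnDr IH; case: k {IH} => //= k; nia.
elim: n => [|n IH] //; rewrite binS mulnDr IH.
have := b2 n; case: n {IH} => [|[|n]] //=; nia.
Qed.

Lemma B3_H2 m A : B3_mod A m -> H2 A.
Proof.
move=> B x y u v Hx Hy Hu Hv E; apply: B => //=; first by rewrite Hx Hy.
  by rewrite Hu Hv.
by rewrite !addn0 E.
Qed.

Lemma B3_H3 m A : B3_mod A m -> H3 A.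
Proof.
move=> B x y z u v w Hx Hy Hz Hu Hv Hw E; apply: B => //=; first by rewrite Hx Hy Hz.
  by rewrite Hu Hv Hw.
by rewrite !addn0 !addnA E.
Qed.

Lemma B3_G4 m A : B3_mod A m -> forall x u v w, x \in A -> u \in A -> v \in A -> w \in A ->
  3 * m + x <> u + v + w.
Proof.
move=> B x u v w Hx Hu Hv Hw E.
have := @B [:: x] [:: u; v; w] erefl erefl; rewrite /= Hx Hu Hv Hw => /(_ erefl erefl).
rewrite !addn0 !addnA -E modnMDl => /(_ erefl) /perm_size //.
Qed.
Unset Implicit Arguments.

Theorem proposition3p3 (m a b n : nat) (A : seq nat) :
  0 < m -> 0 < a -> 0 < b -> 3 <= n ->
  3 * m + 1 <= 2 * a -> a < b -> 3 * b <= 5 * m - 1 ->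
  uniq A -> size A = n - 1 -> all (fun x => 0 < x) A ->
  a \in A -> (forall x, x \in A -> a <= x) ->
  b \in A -> (forall x, x \in A -> x <= b) ->
  B3_mod A m ->
  [/\ cond (m :: A) (4 * m) = 4 * m,
      cardPL (m :: A) (4 * m) = n &
      W0 (m :: A) (4 * m) = (- ('C(n, 3))%:Z)%R].
Proof.
move=> Hm0 Ha0 Hb0 Hn Ha Hab Hb HU Hsz _ Ha1 Hamin Hb1 Hbmax B.
have HB : Bnd m A by move=> u Hu; have := Hamin _ Hu; have := Hbmax _ Hu; lia.
have Hm : 5 <= m by lia.
have G2 := B3_H2 B; have G3 := B3_H3 B; have G4 := B3_G4 B.
have Hc := cond_eq Hm HB.
have HmA : m \notin A by apply/negP => /HB; lia.
have HPL : cardPL (m :: A) (4 * m) = n.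
  rewrite /cardPL Hc (@count_eq _ 0 (4 * m) (m :: A)) /= ?Hsz; first by lia.
  - by rewrite HmA.
  - move=> z; rewrite in_cons => /orP [/eqP -> | /HB]; lia.
  - by move=> z Hz; rewrite inP_char //; lia.
split => //.
have HL : cardL (m :: A) (4 * m) = size (Llist m A).
  rewrite /cardL Hc (@count_eq _ 0 (4 * m) (Llist m A)) //.
  - exact: uniq_L.
  - by move=> z /(Lbnd Hm HB); lia.
  - by move=> z Hz; rewrite inS_lt4 //; lia.
have HD : cardDq (m :: A) (4 * m) = size (Dlist m A).
  rewrite /cardDq Hc mult_eq // (@count_eq _ (4 * m) m (Dlist m A)) //.
  - exact: uniq_D.
  - by move=> z /(Dbnd Hm HB); lia.
  - by move=> z Hz; rewrite inD_char //; lia.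
have Hq : qS (m :: A) (4 * m) = 4.
  rewrite /qS Hc mult_eq // (_ : 4 * m + m - 1 = 4 * m + m.-1); last by lia.
  by rewrite divnMDl // divn_small //; lia.
have Hr : rhoS (m :: A) (4 * m) = 0.
  by rewrite /rhoS Hq mult_eq // Hc subnn.
rewrite /W0 HPL HL HD Hq Hr.
have eP := size_pairs A; have eT := size_triples A; have eC := bin3 n.
rewrite /Llist /Dlist /= !size_cat !size_map /= in HL HD *.
rewrite Hsz in eP eT.
set P := size (pairs A) in eP *; set T := size (triples A) in eT *.
have Hnat : n * (4 + (n - 1 + (n - 1 + (n - 1 + P)))) + 'C(n, 3) = 4 * (P + (n - 1 + T)).+1.
  nia.
lia.
Qed.
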